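(* Let $A$ be an $n\times n$ matrix over $\mathbb{C}$ (or $\mathbb{R}$) with $A^3\neq 0$. Then $A^2\otimes A=A\otimes A^2$ if and only if $A^2\otimes A^3\otimes A=A\otimes A^3\otimes A^2$.
   Context: Here $\otimes$ denotes the Kronecker product of matrices: for $A=[a_{ij}]$, $A\otimes B$ is the block matrix whose $(i,j)$ block is $a_{ij}B$. *)

(* Defs.v *)
From mathcomp Require Import all_boot all_order all_algebra.
From mathcomp Require Export mxtens.
Set Implicit Arguments. Unset Strict Implicit. Unset Printing Implicit Defensive.

(* Main.v *)
Require Import Defs.
From mathcomp Require Import all_boot all_order all_algebra.
From mathcomp Require Import mxtens.
Import GRing.Theory Num.Theory.
Local Open Scope ring_scope.

Lemma tens_eqP (R : comPzRingType) m n p q (X Z : 'M[R]_(m, n)) (Y W : 'M[R]_(p, q)) :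
  X *t Y = Z *t W <-> forall i j k l, X i k * Y j l = Z i k * W j l.
Proof.
split.
  by move=> H i j k l; rewrite -!tensmxE H.
move=> H; apply/matrixP => a b.
rewrite -(mxtens_unindexK a) -(mxtens_unindexK b).
case: (mxtens_unindex a) => i j; case: (mxtens_unindex b) => k l.
by rewrite !tensmxE.
Qed.

Theorem lemma2p5 (R : numFieldType) (n : nat) (A : 'M[R]_n) :
  A ^+ 3 != 0 ->
  ((A ^+ 2) *t A = A *t (A ^+ 2) <->
   (A ^+ 2) *t (A ^+ 3) *t A = A *t (A ^+ 3) *t (A ^+ 2)).
Proof.
move=> A3; split.
  move/tens_eqP => H; apply/tens_eqP => i j k l.
  rewrite -(mxtens_unindexK i) -(mxtens_unindexK k).
  case: (mxtens_unindex i) => i1 i2; case: (mxtens_unindex k) => k1 k2.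
  by rewrite !tensmxE mulrAC H mulrAC.
move/tens_eqP => H; apply/tens_eqP => i j k l.
case: (boolP [exists a, exists b, (A ^+ 3) a b != 0]).
  move=> /existsP [a /existsP [b Hab]].
  have := H (mxtens_index (i, a)) j (mxtens_index (k, b)) l.
  rewrite !tensmxE mulrAC [X in _ = X]mulrAC.
  by move/(mulIf Hab).
move=> /existsPn Hn; case/negP: A3; apply/eqP/matrixP => a b.
by move: (Hn a) => /existsPn /(_ b) /negPn /eqP ->; rewrite mxE.
Qed.
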